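(* Let $\alpha>0$, $\beta>0$, $D>0$, integers $T\ge1$ and $W\ge0$, and $2D\le L_T\le DT$. Let $X=[-D/2,D/2]$ and $x_0=0$. Set $\Delta=\lceil T/\lfloor L_T/D\rfloor\rceil$ and $K=\lceil T/\Delta\rceil$. Let $\theta_{k\Delta+1}$, $k=0,\dots,K-1$, be i.i.d. with $\mathbb P(\theta=D/2)=\mathbb P(\theta=-D/2)=1/2$, and let $\theta_t=\theta_{k\Delta+1}$ for $k\Delta+2\le t\le\min(k\Delta+\Delta,T)$. Let $f_t(x)=\frac\alpha2(x-\theta_t)^2$, and let $x^*=\arg\min_{x\in X^T}\sum_{t=1}^T\big(f_t(x_t)+\frac\beta2(x_t-x_{t-1})^2\big)$. Let $J=\{1\le t\le T-W:\ t+W\equiv1\pmod\Delta\}$. Then for any online deterministic algorithm $\mathcal A$ with prediction window $W$, $$\mathbb E|x_t^{\mathcal A}-x_t^*|^2\ge\frac{a_{t,t+W}^2D^2}{4}\qquad\text{for all }t\in J,$$ where $a_{t,s}$ denotes the $(t,s)$ entry of $A=H^{-1}$.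
   Context: Online deterministic algorithm with prediction window $W$: $x_t^{\mathcal A}=\mathcal A_t(I_t)$, where $\mathcal A_t$ is a deterministic map and $I_t$ consists of fixed initial knowledge together with $f_1,\dots,f_{\min(t+W-1,T)}$. Thus $x_t^{\mathcal A}$ is a deterministic function of $\theta_1,\dots,\theta_{\min(t+W-1,T)}$. $H\in\mathbb R^{T\times T}$ is the symmetric tridiagonal matrix with diagonal entries $1+2\beta/\alpha$ (except the last, which is $1+\beta/\alpha$) and off-diagonal entries $-\beta/\alpha$. It is invertible, and $x^*=H^{-1}\theta$. *)

(* Defs.v *)
From mathcomp Require Import all_boot all_order all_algebra archimedean.
From mathcomp Require Import reals.
Set Implicit Arguments. Unset Strict Implicit. Unset Printing Implicit Defensive.
Import Order.TTheory GRing.Theory Num.Theory.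
Local Open Scope ring_scope.

Section Defs.
Variable R : realType.

Definition Delta (D L : R) (T : nat) : nat :=
  `| Num.ceil ((T%:R : R) / (`| Num.floor (L / D) |%N)%:R) |%N.

Definition Kblocks (D L : R) (T : nat) : nat :=
  `| Num.ceil ((T%:R : R) / (Delta D L T)%:R) |%N.

(* theta_t (times t = 1..T), determined by a sign vector s of length K:
   theta_t = theta_{k Delta + 1} for k = (t-1) / Delta, equal to D/2 if the
   k-th sign is true, -D/2 otherwise. *)
Definition theta (D : R) (Dl : nat) (K : nat) (s : K.-tuple bool) (t : nat) : R :=
  if nth false s ((t.-1) %/ Dl) then D / 2 else - (D / 2).

(* Expectation over i.i.d. uniform signs (uniform distribution on K.-tuples) *)
Definition Esign (K : nat) (g : K.-tuple bool -> R) : R :=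
  (2 ^+ K)^-1 * \sum_(s : K.-tuple bool) g s.

Definition feasible (D : R) (T : nat) (x : nat -> R) : Prop :=
  forall t, (1 <= t <= T)%N -> - (D / 2) <= x t <= D / 2.

Definition cost (alpha beta : R) (T : nat) (th x : nat -> R) : R :=
  \sum_(1 <= t < T.+1)
     (alpha / 2 * (x t - th t) ^+ 2
      + beta / 2 * (x t - (if t == 1%N then 0 else x t.-1)) ^+ 2).

(* the tridiagonal matrix H (0-based indices i <-> time i+1) *)
Definition Hmat (alpha beta : R) (T : nat) : 'M[R]_T :=
  \matrix_(i < T, j < T)
    if i == j then (if (i : nat) == T.-1 then 1 + beta / alpha
                    else 1 + 2 * beta / alpha)
    else if ((i : nat) == j.+1) || ((j : nat) == i.+1) then - (beta / alpha)
    else 0.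

(* a_{t,s}: the (t,s) entry (1-based) of A = H^{-1} *)
Definition aent (alpha beta : R) (T : nat) (t s : nat) : R :=
  match @insub _ (fun k => k < T)%N _ t.-1, @insub _ (fun k => k < T)%N _ s.-1 with
  | Some i, Some j => invmx (Hmat alpha beta T) i j
  | _, _ => 0
  end.

Definition online (W T : nat) (Alg : nat -> (nat -> R) -> R) : Prop :=
  forall t (th1 th2 : nat -> R),
    (forall u, (1 <= u <= minn (t + W).-1 T)%N -> th1 u = th2 u) ->
    Alg t th1 = Alg t th2.

End Defs.

(* Main.v *)
Require Import Defs.
From mathcomp Require Import all_boot all_order all_algebra archimedean.
From mathcomp Require Import reals.
From mathcomp Require Import ring lra zify.
Set Implicit Arguments. Unset Strict Implicit. Unset Printing Implicit Defensive.
Import Order.TTheory GRing.Theory Num.Theory.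
Local Open Scope ring_scope.

Section Aux.
Variable R : realType.

Definition ext (T : nat) (f : 'I_T -> R) (k : nat) : R :=
  if @insub _ (fun k => k < T)%N 'I_T k.-1 is Some i then f i else 0.

Lemma extE T (f : 'I_T -> R) (i : 'I_T) : ext f i.+1 = f i.
Proof. by rewrite /ext /= valK. Qed.

Definition Hf (r : R) (T : nat) (x : nat -> R) (t : nat) : R :=
  x t + r * (x t - (if t == 1%N then 0 else x t.-1))
  + (if (t < T)%N then r * (x t - x t.+1) else 0).

Lemma Hf_lin r T (x y : nat -> R) a b t :
  Hf r T (fun u => a * x u + b * y u) t = a * Hf r T x t + b * Hf r T y t.
Proof. rewrite /Hf; case: (t == 1%N); case: (t < T)%N; ring. Qed.

Lemma sum_ind (n k : nat) (F : nat -> R) :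
  \sum_(0 <= i < n) (if i == k then F i else 0) = if (k < n)%N then F k else 0.
Proof.
elim: n => [|n IH]; first by rewrite big_geq.
rewrite big_nat_recr //= IH.
case: (ltngtP k n) => [h|h|->].
- by rewrite (ltn_trans h (ltnSn _)) addr0.
- have -> : (k < n.+1)%N = false by lia.
  by rewrite addr0.
- by rewrite ltnSn add0r.
Qed.

Lemma sum_ind_ord (T k : nat) (F : nat -> R) :
  \sum_(i < T) (if (i == k :> nat) then F i else 0) = if (k < T)%N then F k else 0.
Proof. by rewrite -(big_mkord xpredT (fun i => if i == k then F i else 0)) sum_ind. Qed.

Lemma bridge (alpha beta : R) T (j : 'I_T) (x : nat -> R) :
  \sum_(i < T) Hmat alpha beta T j i * x i.+1 = Hf (beta / alpha) T x j.+1.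
Proof.
set r := beta / alpha.
set d := if (j : nat) == T.-1 then 1 + r else 1 + 2 * r.
have E : forall i : 'I_T, Hmat alpha beta T j i * x i.+1 =
   (if (i == j :> nat) then d * x i.+1 else 0)
   + (if (i.+1 == j)%N then - r * x i.+1 else 0)
   + (if (i == j.+1 :> nat) then - r * x i.+1 else 0).
  move=> i; rewrite /Hmat mxE /d /r.
  case: (eqVneq i j) => [->|hij].
    rewrite !eqxx (gtn_eqF (ltnSn j)) (ltn_eqF (ltnSn j)).
    by case: ifP => _; ring.
  have hij' : ((i : nat) == j) = false by apply/negbTE.
  rewrite hij'.
  case: (eqVneq (i : nat) j.+1) => [h|h].
    have -> : (i.+1 == j) = false by apply/eqP; lia.
    by rewrite orbT; ring.
  case: (eqVneq (j : nat) i.+1) => [h2|h2].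
    by rewrite /=; ring.
  by rewrite /=; ring.
under eq_bigr => i _ do rewrite E.
rewrite !big_split /=.
rewrite (sum_ind_ord T j (fun i => d * x i.+1)).
rewrite (sum_ind_ord T j.+1 (fun i => - r * x i.+1)) ltn_ord.
have -> : \sum_(i < T) (if (i.+1 == j)%N then - r * x i.+1 else 0)
   = if (j == 0%N :> nat) then 0 else - r * x j.
  case: (posnP j) => [hj|hj].
    by rewrite hj /=; apply: big1 => i _.
  under eq_bigr => i _ do rewrite -(prednK hj) eqSS.
  have hjT := ltn_ord j.
  rewrite (sum_ind_ord T j.-1 (fun i => - r * x i.+1)) (_ : (j.-1 < T)%N = true) ?prednK //; lia.
have hjT := ltn_ord j.
rewrite /Hf /d /= eqSS.
case: (ltnP j.+1 T) => hT.
  rewrite ifF; last by apply/negbTE; lia.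
  by case: eqP => _; ring.
rewrite ifT; last by apply/eqP; lia.
by case: eqP => _; ring.
Qed.

Lemma maxp r T (x : nat -> R) c : 0 <= r -> 0 <= c ->
  (forall t, (1 <= t <= T)%N -> Hf r T x t <= c) ->
  forall t, (1 <= t <= T)%N -> x t <= c.
Proof.
move=> hr hc H.
case: T H => [|n] H t ht; first by lia.
pose F := fun i : 'I_n.+1 => x i.+1.
case: (@arg_maxP _ _ _ ord0 xpredT F isT) => m _ Hm.
have Hle : forall k, (k < n.+1)%N -> x k.+1 <= x m.+1.
  by move=> k hk; have := Hm (inord k) isT; rewrite /F inordK.
have -> : t = (t.-1).+1 by lia.
apply: le_trans (Hle _ _) _; first by lia.
case: (lerP (x m.+1) 0) => hx; first by apply: le_trans hx hc.
apply: le_trans (H m.+1 _); last by rewrite ltn0Sn /=; apply: ltn_ord.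
rewrite /Hf eqSS.
have h1 : 0 <= r * (x m.+1 - (if (m == 0 :> nat) then 0 else x m.+1.-1)).
  apply: mulr_ge0 => //; rewrite subr_ge0; case: eqP => hm.
    exact: ltW.
  have hm0 : (0 < m)%N by rewrite lt0n; apply/eqP.
  by have := Hle m.-1 (leq_ltn_trans (leq_pred m) (ltn_ord m)); rewrite prednK.
have h2 : 0 <= (if (m.+1 < n.+1)%N then r * (x m.+1 - x m.+2) else 0).
  case: ifP => // hm; apply: mulr_ge0 => //; rewrite subr_ge0.
  exact: Hle.
by rewrite -addrA lerDl; apply: addr_ge0.
Qed.


Lemma ord_all T (P : nat -> Prop) : (forall j : 'I_T, P j.+1) ->
  forall t, (1 <= t <= T)%N -> P t.
Proof.
move=> H t ht; have hj : (t.-1 < T)%N by lia.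
by have := H (Ordinal hj); rewrite /= prednK //; lia.
Qed.

Lemma shift_sum T (F G : nat -> R) :
  \sum_(1 <= t < T.+1) F t * (if t == 1%N then 0 else G t.-1)
  = \sum_(1 <= t < T.+1) (if (t < T)%N then F t.+1 * G t else 0).
Proof.
case: T => [|T]; first by rewrite !big_geq.
rewrite big_ltn // eqxx mulr0 add0r big_add1 /=.
rewrite [RHS]big_nat_recr //= ltnn addr0.
apply: eq_big_nat => i /andP[h1 h2].
have -> : (i < T.+1)%N = true by lia.
by have -> : (i.+1 == 1%N) = false by lia.
Qed.

Lemma cost_split a b T (th z y : nat -> R) : a != 0 ->
  (forall t, (1 <= t <= T)%N -> Hf (b / a) T z t = th t) ->
  cost a b T th y = cost a b T th z +
    \sum_(1 <= t < T.+1) (a / 2 * (y t - z t) ^+ 2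
      + b / 2 * ((y t - z t) - (if t == 1%N then 0 else y t.-1 - z t.-1)) ^+ 2).
Proof.
move=> ha Hz.
pose F t := b * (z t - (if t == 1%N then 0 else z t.-1)).
pose G u := y u - z u.
have step1 : cost a b T th y - cost a b T th z -
    \sum_(1 <= t < T.+1) (a / 2 * (y t - z t) ^+ 2
      + b / 2 * ((y t - z t) - (if t == 1%N then 0 else y t.-1 - z t.-1)) ^+ 2)
  = \sum_(1 <= t < T.+1) (a * (z t - th t) * G t + F t * G t)
    - \sum_(1 <= t < T.+1) F t * (if t == 1%N then 0 else G t.-1).
  rewrite /cost -!sumrB; apply: eq_bigr => t _; rewrite /F /G.
  by case: (t == 1%N); field.
rewrite shift_sum in step1.
have step2 : \sum_(1 <= t < T.+1) (a * (z t - th t) * G t + F t * G t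
     - (if (t < T)%N then F t.+1 * G t else 0)) = 0.
  rewrite big_nat_cond big1 // => t /andP[/andP[h1 h2] _].
  have := Hz t ltac:(lia); rewrite /Hf /F.
  have -> : (t.+1 == 1%N) = false by lia.
  move=> <- /=.
  case: (t == 1%N); case: (t < T)%N; field; exact: ha.
rewrite sumrB in step2; rewrite step2 in step1.
by apply/eqP; rewrite -subr_eq0 opprD addrA step1.
Qed.


Lemma eq_ler_helper (x y : R) : x = y -> x <= y.
Proof. by move=> ->. Qed.

Lemma HfN r T (x : nat -> R) t : Hf r T (fun u => - x u) t = - Hf r T x t.
Proof. rewrite /Hf; case: (t == 1%N); case: (t < T)%N; ring. Qed.

Lemma HfB r T (x y : nat -> R) t :
  Hf r T (fun u => x u - y u) t = Hf r T x t - Hf r T y t.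
Proof. rewrite /Hf; case: (t == 1%N); case: (t < T)%N; ring. Qed.

Lemma Hmat_sym (a b : R) T (i j : 'I_T) : Hmat a b T i j = Hmat a b T j i.
Proof.
rewrite /Hmat !mxE; case: (eqVneq i j) => [->|h]; first by [].
by rewrite orbC.
Qed.

Lemma Hunit (a b : R) T : 0 < a -> 0 < b -> Hmat a b T \in unitmx.
Proof.
move=> ha hb.
have hr : 0 <= b / a by apply: divr_ge0; apply: ltW.
rewrite -row_free_unit -kermx_eq0; apply/eqP/row_matrixP => i.
rewrite row0; set u := row i (kermx (Hmat a b T)).
have hu : u *m Hmat a b T = 0 by rewrite /u -row_mul mulmx_ker row0.
pose x := ext (fun k : 'I_T => u 0 k).
have Hx : forall t, (1 <= t <= T)%N -> Hf (b / a) T x t = 0.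
  apply: ord_all => j; rewrite -bridge.
  under eq_bigr => k _ do rewrite /x extE Hmat_sym mulrC.
  by have := congr1 (fun M : 'M[R]_(1,T) => M ord0 j) hu; rewrite !mxE.
have H1 := maxp hr (lexx 0) (fun t ht => eq_ler_helper (Hx t ht)).
idtac.
have H2 : forall t, (1 <= t <= T)%N -> - x t <= 0.
  apply: (@maxp (b / a) T (fun t => - x t) 0 hr (lexx 0)) => t ht.
  by rewrite HfN (Hx t ht) oppr0.
apply/rowP => j.
have : u 0 j = 0.
  have := H1 j.+1 ltac:(apply/andP; split; [done|exact: ltn_ord]).
  have := H2 j.+1 ltac:(apply/andP; split; [done|exact: ltn_ord]).
  rewrite /x extE; lra.
by move=> ->; rewrite mxE.
Qed.


Definition zsol (a b : R) T (th : nat -> R) : nat -> R :=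
  ext (fun i : 'I_T => \sum_(j < T) invmx (Hmat a b T) i j * th j.+1).

Lemma Hf_zsol (a b : R) T th : 0 < a -> 0 < b ->
  forall t, (1 <= t <= T)%N -> Hf (b / a) T (zsol a b T th) t = th t.
Proof.
move=> ha hb; apply: ord_all => j; rewrite -bridge.
under eq_bigr => i _ do rewrite /zsol extE.
pose c : 'cV[R]_T := \col_k th k.+1.
have E : forall i, \sum_(k < T) invmx (Hmat a b T) i k * th k.+1
    = (invmx (Hmat a b T) *m c) i ord0.
  by move=> i; rewrite mxE; apply: eq_bigr => k _; rewrite mxE.
transitivity ((Hmat a b T *m (invmx (Hmat a b T) *m c)) j ord0).
  by rewrite mxE; apply: eq_bigr => i _; rewrite E.
by rewrite mulmxA mulmxV ?Hunit // mul1mx mxE.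
Qed.

Lemma zsol_ext (a b : R) T (f g : nat -> R) t :
  (forall u, (1 <= u <= T)%N -> f u = g u) -> zsol a b T f t = zsol a b T g t.
Proof.
move=> H; rewrite /zsol /ext; case: insub => // i.
apply: eq_bigr => j _; rewrite H //; have := ltn_ord j; lia.
Qed.

Lemma zsol_lin (a b : R) T (f g : nat -> R) c t :
  zsol a b T (fun u => f u + c * g u) t = zsol a b T f t + c * zsol a b T g t.
Proof.
rewrite /zsol /ext; case: insub => [i|]; last by ring.
rewrite big_distrr -big_split; apply: eq_bigr => j _ /=; ring.
Qed.

Lemma zsol_nonneg (a b : R) T (f : nat -> R) : 0 < a -> 0 < b ->
  (forall u, (1 <= u <= T)%N -> 0 <= f u) ->
  forall t, (1 <= t <= T)%N -> 0 <= zsol a b T f t.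
Proof.
move=> ha hb Hf0 t ht.
have hr : 0 <= b / a by apply: divr_ge0; apply: ltW.
have := @maxp (b / a) T (fun u => - zsol a b T f u) 0 hr (lexx 0).
move=> /(_ _ t ht); rewrite oppr_le0; apply => u hu.
by rewrite HfN Hf_zsol // oppr_le0; apply: Hf0.
Qed.

Lemma zsol_bound (a b : R) T (f : nat -> R) c : 0 < a -> 0 < b -> 0 <= c ->
  (forall u, (1 <= u <= T)%N -> - c <= f u <= c) ->
  forall t, (1 <= t <= T)%N -> - c <= zsol a b T f t <= c.
Proof.
move=> ha hb hc Hf0 t ht.
have hr : 0 <= b / a by apply: divr_ge0; apply: ltW.
have H1 := @maxp (b / a) T (zsol a b T f) c hr hc.
have H2 := @maxp (b / a) T (fun u => - zsol a b T f u) c hr hc.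
have h1 : zsol a b T f t <= c.
  apply: H1 ht => u hu; rewrite Hf_zsol //; by case/andP: (Hf0 u hu).
have h2 : - zsol a b T f t <= c.
  apply: H2 ht => u hu; rewrite HfN Hf_zsol // lerNl; by case/andP: (Hf0 u hu).
apply/andP; split; lra.
Qed.

Lemma zsol_aent (a b : R) T t s : (1 <= t <= T)%N -> (1 <= s <= T)%N ->
  zsol a b T (fun u => if u == s then 1 else 0) t = aent a b T t s.
Proof.
move=> ht hs.
have ht' : (t.-1 < T)%N by lia.
have hs' : (s.-1 < T)%N by lia.
rewrite /zsol /aent /ext (@insubT _ (fun k => (k < T)%N) 'I_T _ ht') (@insubT _ (fun k => (k < T)%N) 'I_T _ hs').
rewrite (bigD1 (Sub s.-1 hs')) //= prednK; last by lia.
rewrite eqxx mulr1 big1 ?addr0 // => j hj.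
have -> : (j.+1 == s) = false.
  apply/negbTE; apply: contra hj => /eqP hj; apply/eqP/val_inj => /=; lia.
by rewrite mulr0.
Qed.

Lemma xstar_eq (a b : R) T D (th x : nat -> R) : 0 < a -> 0 < b -> 0 < D ->
  (forall u, (1 <= u <= T)%N -> - (D / 2) <= th u <= D / 2) ->
  feasible D T x /\ (forall y, feasible D T y -> cost a b T th x <= cost a b T th y) ->
  forall t, (1 <= t <= T)%N -> x t = zsol a b T th t.
Proof.
move=> ha hb hD hth [hfx hopt] t ht.
set z := zsol a b T th.
have hz : feasible D T z.
  move=> u hu; apply: zsol_bound => //; lra.
have := hopt z hz.
rewrite (@cost_split a b T th z x) ?gt_eqF //; last by move=> u hu; apply: Hf_zsol.
set Q := \sum_(1 <= t < T.+1) _.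
have hQ : a / 2 * (x t - z t) ^+ 2 <= Q.
  rewrite /Q (@big_cat_nat _ _ _ t) /=; [|lia|lia].
  rewrite (@big_ltn _ _ _ t) /=; last by lia.
  set S1 := \sum_(1 <= i < t) _. set S2 := \sum_(t.+1 <= i < T.+1) _.
  have h1 : 0 <= S1 by apply: sumr_ge0 => i _; apply: addr_ge0; apply: mulr_ge0; rewrite ?sqr_ge0 //; apply: divr_ge0; lra.
  have h2 : 0 <= S2 by apply: sumr_ge0 => i _; apply: addr_ge0; apply: mulr_ge0; rewrite ?sqr_ge0 //; apply: divr_ge0; lra.
  have h3 : 0 <= b / 2 * (x t - z t - (if t == 1%N then 0 else x t.-1 - z t.-1)) ^+ 2.
    by apply: mulr_ge0; rewrite ?sqr_ge0 //; apply: divr_ge0; lra.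
  clearbody S1 S2; move: h3; set q := b / 2 * _ ^+ 2; clearbody q; lra.
move=> hle.
have hsq : (x t - z t) ^+ 2 <= 0.
  have : a / 2 * (x t - z t) ^+ 2 <= 0 by lra.
  rewrite pmulr_rle0 //; apply: divr_gt0 => //; lra.
have : (x t - z t) ^+ 2 = 0 by apply/eqP; rewrite eq_le hsq sqr_ge0.
by move/eqP; rewrite sqrf_eq0 subr_eq0 => /eqP.
Qed.


Lemma Delta_pos (D L : R) T : 0 < D -> 2 * D <= L -> (1 <= T)%N -> (0 < Delta D L T)%N.
Proof.
move=> hD hL hT.
have hf : 2 <= Num.floor (L / D) by rewrite floor_ge_int ler_pdivlMr.
have hm : 0 < (`|Num.floor (L / D)|%N)%:R :> R.
  rewrite natr_absz ger0_norm ?(le_trans _ hf) // ltr0z (lt_le_trans _ hf) //.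
rewrite /Delta absz_gt0 ceil_neq0; apply/orP; right.
by apply: divr_gt0 => //; rewrite ltr0n.
Qed.

Lemma K_ge (D L : R) T : (0 < Delta D L T)%N -> (T <= Kblocks D L T * Delta D L T)%N.
Proof.
move=> hd; rewrite /Kblocks.
set d := Delta D L T.
have hd' : 0 < d%:R :> R by rewrite ltr0n.
have hc : 0 <= Num.ceil ((T%:R : R) / d%:R).
  rewrite ceil_ge0.
  have : 0 <= (T%:R : R) / d%:R by apply: divr_ge0; rewrite ler0n.
  lra.
have := ceil_ge ((T%:R : R) / d%:R).
rewrite -(gez0_abs hc) -natr_absz ler_pdivrMr // -natrM ler_nat.
by rewrite gez0_abs.
Qed.

Lemma flip_size K k (hk : (k < K)%N) (s : K.-tuple bool) :
  size (set_nth false s k (~~ nth false s k)) == K.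
Proof. by rewrite size_set_nth size_tuple (maxn_idPr hk). Qed.

Definition flipt K k (hk : (k < K)%N) (s : K.-tuple bool) : K.-tuple bool :=
  Tuple (flip_size hk s).

Lemma nth_flip K k (hk : (k < K)%N) s i :
  nth false (flipt hk s) i = if i == k then ~~ nth false s k else nth false s i.
Proof. by rewrite /flipt /= nth_set_nth. Qed.

Lemma flipK K k (hk : (k < K)%N) : involutive (flipt hk).
Proof.
move=> s; apply: val_inj => /=; apply: (@eq_from_nth _ false).
  by rewrite !size_set_nth size_tuple !(maxn_idPr hk).
move=> i _; rewrite !nth_set_nth /=; case: eqP => [->|hik].
  by rewrite eqxx negbK.
by rewrite nth_set_nth /=; case: eqP.
Qed.

End Aux.

Unset Implicit Arguments.
Set Strict Implicit.

Theorem lemma6 (R : realType) (alpha beta D L : R) (T W : nat)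
  (halpha : 0 < alpha) (hbeta : 0 < beta) (hD : 0 < D) (hT : (1 <= T)%N)
  (hL1 : 2 * D <= L) (hL2 : L <= D * T%:R)
  (Alg : nat -> (nat -> R) -> R)
  (hAlg : online W T Alg)
  (xstar : (Kblocks D L T).-tuple bool -> nat -> R)
  (hxstar : forall s,
     feasible D T (xstar s) /\
     forall y, feasible D T y ->
       cost alpha beta T (theta D (Delta D L T) s) (xstar s)
       <= cost alpha beta T (theta D (Delta D L T) s) y) :
  forall t : nat, (1 <= t)%N -> (t <= T - W)%N ->
    (t + W = 1 %[mod Delta D L T])%N ->
    Esign (fun s => (Alg t (theta D (Delta D L T) s) - xstar s t) ^+ 2)
    >= aent alpha beta T t (t + W) ^+ 2 * D ^+ 2 / 4.
Proof.
move=> t ht1 htW hmod.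
have hDl : (0 < Delta D L T)%N := Delta_pos hD hL1 hT.
have hKD := K_ge hDl.
move: hxstar hmod hKD hDl; rewrite /Esign.
set Dl := Delta D L T; set K := Kblocks D L T => hxstar hmod hKD hDl.
have htWT : (t + W <= T)%N by lia.
set q := (t + W).-1.
have hq : (q %% Dl = 0)%N.
  have : (q + 1 == 0 + 1 %[mod Dl])%N.
    by rewrite add0n (_ : q + 1 = t + W)%N ?hmod //; rewrite /q; lia.
  by rewrite eqn_modDr mod0n => /eqP.
set k := (q %/ Dl)%N.
have hqk : q = (k * Dl)%N by rewrite /k divnK // /dvdn hq.
have hk : (k < K)%N by rewrite /k ltn_divLR //; rewrite /q; lia.
have hblk : forall u, (1 <= u <= q)%N -> ((u.-1 %/ Dl)%N == k) = false.
  move=> u hu; apply/negbTE; rewrite neq_ltn; apply/orP; left.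
  by rewrite ltn_divLR // -hqk; lia.
have hblkW : (((t + W).-1 %/ Dl)%N == k) = true by apply/eqP.
pose fl := flipt hk.
pose th := fun s : K.-tuple bool => theta D Dl s.
pose ind := fun u : nat => if ((u.-1 %/ Dl)%N == k) then 1 else 0 : R.
pose e := fun u : nat => if u == (t + W)%N then 1 else 0 : R.
pose c := fun s : K.-tuple bool => if nth false s k then D else - D.
have hth_fl : forall s u, th s u = th (fl s) u + c s * ind u.
  move=> s u; rewrite /th /theta /fl nth_flip /ind /c.
  case: (eqVneq (u.-1 %/ Dl)%N k) => [->|hne].
    by case: (nth false s k) => /=; field.
  by rewrite mulr0 addr0.
have hthb : forall s u, (1 <= u <= T)%N -> - (D / 2) <= th s u <= D / 2.
  move=> s u _; rewrite /th /theta; case: ifP => _; apply/andP; split; lra.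
have hT1 : (1 <= t <= T)%N by lia.
have hxs : forall s, xstar s t = zsol alpha beta T (th s) t.
  move=> s; exact: (xstar_eq halpha hbeta hD (hthb s) (hxstar s) hT1).
have hAlgfl : forall s, Alg t (th s) = Alg t (th (fl s)).
  move=> s; apply: hAlg => u hu.
  rewrite hth_fl /ind hblk ?mulr0 ?addr0 //; lia.
have hZ : forall s, zsol alpha beta T (th s) t
    = zsol alpha beta T (th (fl s)) t + c s * zsol alpha beta T ind t.
  move=> s; rewrite -zsol_lin; apply: zsol_ext => u _; exact: hth_fl.
set a := aent alpha beta T t (t + W).
have ha_eq : zsol alpha beta T e t = a by rewrite /e zsol_aent //; lia.
have ha0 : 0 <= a.
  rewrite -ha_eq; apply: zsol_nonneg => // u _; rewrite /e; case: ifP => _ //.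
have haZ : a <= zsol alpha beta T ind t.
  have -> : zsol alpha beta T ind t
      = zsol alpha beta T (fun u => e u + 1 * (ind u - e u)) t.
    by apply: zsol_ext => u _; ring.
  rewrite zsol_lin mul1r ha_eq lerDl; apply: zsol_nonneg => // u _.
  rewrite /ind /e; case: (eqVneq u (t + W)%N) => [->|_].
    by rewrite hblkW subrr.
  by rewrite subr0; case: ifP.
pose f := fun s : K.-tuple bool => (Alg t (th s) - xstar s t) ^+ 2.
have hpair : forall s, a ^+ 2 * D ^+ 2 / 2 <= f s + f (fl s).
  move=> s; rewrite /f !hxs -hAlgfl hZ.
  set y := Alg t (th s); set x2 := zsol alpha beta T (th (fl s)) t.
  set Z := zsol alpha beta T ind t.
  have hc2 : c s ^+ 2 = D ^+ 2 by rewrite /c; case: ifP => _; rewrite ?sqrrN.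
  have hv : a ^+ 2 * D ^+ 2 <= (c s * Z) ^+ 2.
    rewrite exprMn hc2 mulrC ler_pM2l ?exprn_gt0 //.
    by rewrite ler_sqr //; apply: le_trans haZ.
  have hw : 0 <= (y - x2 - c s * Z / 2) ^+ 2 by apply: sqr_ge0.
  set v := c s * Z.
  have : (y - (x2 + v)) ^+ 2 + (y - x2) ^+ 2 = 2 * (y - x2 - v / 2) ^+ 2 + v ^+ 2 / 2.
    by field.
  move=> ->.
  rewrite /v in hw *; set w := (y - x2 - c s * Z / 2) ^+ 2.
  move: hv hw; set P := (c s * Z) ^+ 2; set M := a ^+ 2 * D ^+ 2 => hv hw.
  have hw2 : 0 <= w by exact: hw.
  clearbody w P M; lra.
have hsum : \sum_(s : K.-tuple bool) f s = \sum_(s : K.-tuple bool) f (fl s).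
  exact: (reindex_inj (can_inj (flipK hk))).
have h2 : 2 ^+ K * (a ^+ 2 * D ^+ 2 / 2) <= \sum_(s : K.-tuple bool) (f s + f (fl s)).
  apply: le_trans (ler_sum _ (fun s _ => hpair s)).
  by rewrite sumr_const card_tuple card_bool -(mulr_natl (a ^+ 2 * D ^+ 2 / 2) (2 ^ K)%N) natrX.
rewrite big_split /= -hsum in h2.
have hS : \sum_(s : K.-tuple bool) (Alg t (theta D Dl s) - xstar s t) ^+ 2
    = \sum_(s : K.-tuple bool) f s by [].
rewrite hS [_^-1 * _]mulrC ler_pdivlMr ?exprn_gt0 //.
move: h2; set S := \sum_(s : K.-tuple bool) f s; set M := a ^+ 2 * D ^+ 2.
move=> h2; clearbody S M.
have hK : 0 < (2 : R) ^+ K by rewrite exprn_gt0.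
move: hK h2; set P := (2 : R) ^+ K => hK h2.
nra.
Qed.
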